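(* Every Fréchet–Urysohn topological group $G$ has the property (PS).
   Context: A topological group $G$ (with unit $e$) has property (PS) if for every sequence $(g_n)_{n\in\mathbb{N}}$ in $G$ converging to $e$ there are strictly increasing sequences $(m_k)$ and $(n_k)$ of natural numbers such that $g_{n_k}^{m_k}\to e$, where $g^m=g\cdots g$ ($m$ times). A space is Fréchet–Urysohn if whenever $x\in\overline{A}$ there is a sequence in $A$ converging to $x$. *)

(* Defs.v *)
From Stdlib Require Import Arith.

Section Defs.
Context {G : Type}.

Definition is_topology (opn : (G -> Prop) -> Prop) : Prop :=
  opn (fun _ => True) /\
  (forall F : (G -> Prop) -> Prop, (forall U, F U -> opn U) ->
     opn (fun x => exists U, F U /\ U x)) /\
  (forall U V, opn U -> opn V -> opn (fun x => U x /\ V x)).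

Definition is_group (mul : G -> G -> G) (inv : G -> G) (e : G) : Prop :=
  (forall x y z, mul x (mul y z) = mul (mul x y) z) /\
  (forall x, mul e x = x) /\
  (forall x, mul (inv x) x = e).

Definition mul_continuous (opn : (G -> Prop) -> Prop) (mul : G -> G -> G) : Prop :=
  forall x y W, opn W -> W (mul x y) ->
    exists U V, opn U /\ opn V /\ U x /\ V y /\
      (forall a b, U a -> V b -> W (mul a b)).

Definition inv_continuous (opn : (G -> Prop) -> Prop) (inv : G -> G) : Prop :=
  forall x W, opn W -> W (inv x) ->
    exists U, opn U /\ U x /\ (forall a, U a -> W (inv a)).

Definition is_topological_group (opn : (G -> Prop) -> Prop)
  (mul : G -> G -> G) (inv : G -> G) (e : G) : Prop :=
  is_topology opn /\ is_group mul inv e /\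
  mul_continuous opn mul /\ inv_continuous opn inv.

Definition seq_converges (opn : (G -> Prop) -> Prop) (s : nat -> G) (x : G) : Prop :=
  forall U, opn U -> U x -> exists N, forall n, N <= n -> U (s n).

Definition in_closure (opn : (G -> Prop) -> Prop) (A : G -> Prop) (x : G) : Prop :=
  forall U, opn U -> U x -> exists a, A a /\ U a.

Definition frechet_urysohn (opn : (G -> Prop) -> Prop) : Prop :=
  forall (A : G -> Prop) (x : G), in_closure opn A x ->
    exists s : nat -> G, (forall n, A (s n)) /\ seq_converges opn s x.

Fixpoint gpow (mul : G -> G -> G) (e : G) (g : G) (m : nat) : G :=
  match m with
  | O => e
  | S m' => mul g (gpow mul e g m')
  end.

Definition strictly_increasing (f : nat -> nat) : Prop :=
  forall k, f k < f (S k).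

Definition property_PS (opn : (G -> Prop) -> Prop) (mul : G -> G -> G) (e : G) : Prop :=
  forall g : nat -> G, seq_converges opn g e ->
    exists mk nk : nat -> nat,
      strictly_increasing mk /\ strictly_increasing nk /\
      seq_converges opn (fun k => gpow mul e (g (nk k)) (mk k)) e.

End Defs.

(* Main.v *)
Require Import Defs.
From Stdlib Require Import Arith Lia Classical ClassicalEpsilon.

Theorem mainTheorem11 (G : Type) (opn : (G -> Prop) -> Prop)
  (mul : G -> G -> G) (inv : G -> G) (e : G)
  (HG : is_topological_group opn mul inv e)
  (HFU : frechet_urysohn opn) :
  property_PS opn mul e.
Proof.
  destruct HG as [[Hall [Hunion Hinter]] [[Hass [Hid Hinv]] [Hmc Hic]]].
  assert (rinv : forall x, mul x (inv x) = e).
  { intros x. transitivity (mul (mul (inv (inv x)) (inv x)) (mul x (inv x))).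
    - rewrite Hinv, Hid; reflexivity.
    - rewrite <- Hass. rewrite (Hass (inv x) x (inv x)). rewrite Hinv, Hid. apply Hinv. }
  assert (rid : forall x, mul x e = x).
  { intros x. rewrite <- (Hinv x). rewrite Hass, rinv. apply Hid. }
  assert (cancL : forall a b, mul (inv a) (mul a b) = b).
  { intros a b. rewrite Hass, Hinv, Hid. reflexivity. }
  assert (cancR : forall a b, mul (mul a b) (inv b) = a).
  { intros a b. rewrite <- Hass, rinv, rid. reflexivity. }
  assert (inve : inv e = e).
  { rewrite <- (rid (inv e)). apply Hinv. }
  assert (K1 : forall O, opn O -> O e -> exists V1 V2, opn V1 /\ opn V2 /\ V1 e /\ V2 e /\
              forall a b, V1 a -> V2 b -> O (mul (inv a) b)).
  { intros O HO HOe.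
    destruct (Hmc (inv e) e O HO) as [U [V [HU [HV [HUe [HVe HUV]]]]]].
    { rewrite inve, Hid. exact HOe. }
    destruct (Hic e U HU HUe) as [U' [HU' [HU'e HU'U]]].
    exists U', V. repeat split; auto. }
  assert (K2 : forall O, opn O -> O e -> exists V1 V2, opn V1 /\ opn V2 /\ V1 e /\ V2 e /\
              forall a b, V1 a -> V2 b -> O (mul a (inv b))).
  { intros O HO HOe.
    destruct (Hmc e (inv e) O HO) as [U [V [HU [HV [HUe [HVe HUV]]]]]].
    { rewrite rinv. exact HOe. }
    destruct (Hic e V HV HVe) as [V' [HV' [HV'e HV'V]]].
    exists U, V'. repeat split; auto. }
  assert (gconv : forall h : nat -> G, seq_converges opn h e ->
            forall m, seq_converges opn (fun n => gpow mul e (h n) m) e).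
  { intros h Hh m. induction m as [|m IHm]; intros U HU HUe.
    - exists 0. intros; simpl; exact HUe.
    - destruct (Hmc e e U HU) as [U1 [U2 [HU1 [HU2 [HU1e [HU2e HUU]]]]]].
      { rewrite Hid; exact HUe. }
      destruct (Hh U1 HU1 HU1e) as [N1 HN1].
      destruct (IHm U2 HU2 HU2e) as [N2 HN2].
      exists (max N1 N2). intros n Hn. simpl. apply HUU.
      + apply HN1; lia.
      + apply HN2; lia. }
  pose (Ne := fun x => forall U, opn U -> U e -> U x).
  assert (Ne_gpow : forall a m, Ne a -> Ne (gpow mul e a m)).
  { intros a m Ha. induction m as [|m IHm]; intros U HU HUe; simpl.
    - exact HUe.
    - destruct (Hmc e e U HU) as [U1 [U2 [HU1 [HU2 [HU1e [HU2e HUU]]]]]].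
      { rewrite Hid; exact HUe. }
      apply HUU; [apply Ha | apply IHm]; auto. }
  assert (fin : forall (f : nat -> G) K, exists W, opn W /\ W e /\
            forall n, n < K -> ~ Ne (f n) -> ~ W (f n)).
  { intros f K. induction K as [|K IHK].
    - exists (fun _ => True). repeat split; auto. intros; lia.
    - destruct IHK as [W [HW [HWe HWf]]].
      destruct (classic (Ne (f K))) as [HK|HK].
      + exists W. repeat split; auto. intros n Hn Hnn.
        destruct (Nat.eq_dec n K) as [->|Hne]; [contradiction|].
        apply HWf; auto; lia.
      + unfold Ne in HK. apply not_all_ex_not in HK. destruct HK as [U HU].
        apply imply_to_and in HU. destruct HU as [HUo HU].
        apply imply_to_and in HU. destruct HU as [HUe HU].
        exists (fun x => W x /\ U x). repeat split; auto.
        intros n Hn Hnn [HWn HUn].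
        destruct (Nat.eq_dec n K) as [->|Hne]; [contradiction|].
        apply (HWf n); auto; lia. }
  intros g Hg.
  destruct (classic (exists n0, forall n, n0 <= n -> ~ Ne (g n))) as [[n0 Hn0]|Hcase].
  2:{
    assert (Hinf : forall N, exists n, N <= n /\ Ne (g n)).
    { intros N. apply NNPP. intro H. apply Hcase. exists N. intros n Hn HNe.
      apply H. eauto. }
    pose (pick := fun N => proj1_sig (constructive_indefinite_description _ (Hinf N))).
    assert (Hpick : forall N, N <= pick N /\ Ne (g (pick N))).
    { intros N. exact (proj2_sig (constructive_indefinite_description _ (Hinf N))). }
    pose (nk := fix f (k : nat) : nat := match k with 0 => pick 0 | S k' => pick (S (f k')) end).
    exists (fun k => k), nk. split; [|split].
    - intros k; lia.
    - intros k. simpl. destruct (Hpick (S (nk k))). lia.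
    - intros U HU HUe. exists 0. intros k _. apply Ne_gpow; auto.
      destruct k; simpl; apply Hpick; auto. }
  pose (P := fun m n => mul (gpow mul e (g n) m) (g m)).
  pose (A := fun x => exists m n, n0 <= m /\ m <= n /\ x = P m n /\ ~ Ne x).
  assert (Hcl : in_closure opn A e).
  { intros U HU HUe.
    destruct (Hmc e e U HU) as [U1 [U2 [HU1 [HU2 [HU1e [HU2e HUU]]]]]].
    { rewrite Hid; exact HUe. }
    destruct (Hg U2 HU2 HU2e) as [N1 HN1].
    set (m := max n0 N1).
    assert (Hgm : ~ Ne (g m)) by (apply Hn0; lia).
    unfold Ne in Hgm. apply not_all_ex_not in Hgm. destruct Hgm as [O HO].
    apply imply_to_and in HO. destruct HO as [HOo HO].
    apply imply_to_and in HO. destruct HO as [HOe HO].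
    destruct (K1 O HOo HOe) as [V1 [V2 [HV1 [HV2 [HV1e [HV2e HV]]]]]].
    destruct (gconv g Hg m (fun x => U1 x /\ V1 x) (Hinter _ _ HU1 HV1) (conj HU1e HV1e))
      as [K HK].
    set (n := max m K).
    destruct (HK n ltac:(lia)) as [Hp1 Hp2].
    exists (P m n). split.
    - exists m, n. repeat split; try lia.
      intro HNe. apply HO.
      rewrite <- (cancL (gpow mul e (g n) m) (g m)).
      apply HV; auto. apply (HNe V2); auto.
    - apply HUU; auto. apply HN1. lia. }
  destruct (HFU A e Hcl) as [s [HsA Hs]].
  assert (Hp : forall j, exists p : nat * nat, n0 <= fst p /\ fst p <= snd p /\
                  s j = P (fst p) (snd p) /\ ~ Ne (s j)).
  { intros j. destruct (HsA j) as [m [n [H1 [H2 [H3 H4]]]]]. exists (m, n); simpl; auto. }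
  pose (pj := fun j => proj1_sig (constructive_indefinite_description _ (Hp j))).
  assert (Hpj : forall j, n0 <= fst (pj j) /\ fst (pj j) <= snd (pj j) /\
                  s j = P (fst (pj j)) (snd (pj j)) /\ ~ Ne (s j)).
  { intros j. exact (proj2_sig (constructive_indefinite_description _ (Hp j))). }
  pose (mj := fun j => fst (pj j)). pose (nj := fun j => snd (pj j)).
  assert (single : forall m, exists W, opn W /\ W e /\
            forall n, n0 <= m -> ~ Ne (P m n) -> ~ W (P m n)).
  { intros m. destruct (le_lt_dec n0 m) as [Hm|Hm].
    2:{ exists (fun _ => True). repeat split; auto. intros; lia. }
    assert (Hgm : ~ Ne (g m)) by (apply Hn0; lia).
    unfold Ne in Hgm. apply not_all_ex_not in Hgm. destruct Hgm as [O HO].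
    apply imply_to_and in HO. destruct HO as [HOo HO].
    apply imply_to_and in HO. destruct HO as [HOe HO].
    destruct (K1 O HOo HOe) as [V1 [V2 [HV1 [HV2 [HV1e [HV2e HV]]]]]].
    destruct (gconv g Hg m V1 HV1 HV1e) as [K HK].
    destruct (fin (P m) K) as [W [HW [HWe HWf]]].
    exists (fun x => W x /\ V2 x). repeat split; auto.
    intros n _ Hnn [HWn HVn].
    destruct (le_lt_dec K n) as [HKn|HKn].
    - apply HO. rewrite <- (cancL (gpow mul e (g n) m) (g m)). apply HV; auto.
    - apply (HWf n); auto. }
  assert (excl : forall M, exists W, opn W /\ W e /\
            forall m n, m <= M -> n0 <= m -> ~ Ne (P m n) -> ~ W (P m n)).
  { intros M. induction M as [|M IHM].
    - destruct (single 0) as [W [HW [HWe HWf]]]. exists W. repeat split; auto.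
      intros m n Hm. assert (m = 0) by lia. subst m. apply HWf.
    - destruct IHM as [W [HW [HWe HWf]]].
      destruct (single (S M)) as [W' [HW' [HW'e HW'f]]].
      exists (fun x => W x /\ W' x). repeat split; auto.
      intros m n Hm H0 Hnn [Hx Hx'].
      destruct (Nat.eq_dec m (S M)) as [->|Hne].
      + apply (HW'f n); auto.
      + apply (HWf m n); auto; lia. }
  assert (unb : forall M J, exists j, J <= j /\ M < mj j).
  { intros M J. apply NNPP. intro H.
    destruct (excl M) as [W [HW [HWe HWf]]].
    destruct (Hs W HW HWe) as [N HN].
    set (j := max J N).
    destruct (Hpj j) as [H1 [H2 [H3 H4]]].
    assert (mj j <= M).
    { destruct (le_lt_dec (mj j) M); auto. exfalso. apply H. exists j. split; auto; lia. }
    apply (HWf (mj j) (nj j)); auto.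
    - unfold mj, nj. rewrite <- H3. exact H4.
    - unfold mj, nj. rewrite <- H3. apply HN. lia. }
  pose (next := fun j => proj1_sig (constructive_indefinite_description _ (unb (nj j) (S j)))).
  assert (Hnext : forall j, S j <= next j /\ nj j < mj (next j)).
  { intros j. exact (proj2_sig (constructive_indefinite_description _ (unb (nj j) (S j)))). }
  pose (jk := fix f (k : nat) : nat := match k with 0 => 0 | S k' => next (f k') end).
  assert (Hmn : forall j, mj j <= nj j) by (intros j; apply Hpj).
  assert (Hjk : forall k, k <= jk k).
  { induction k as [|k IH]; simpl; [lia|]. destruct (Hnext (jk k)). lia. }
  assert (Hmk : forall k, mj (jk k) < mj (jk (S k))).
  { intros k. simpl. destruct (Hnext (jk k)). specialize (Hmn (jk k)). lia. }
  assert (Hmkk : forall k, k <= mj (jk k)).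
  { induction k as [|k IH]; [lia|]. specialize (Hmk k). lia. }
  exists (fun k => mj (jk k)), (fun k => nj (jk k)). split; [|split].
  - intros k; apply Hmk.
  - intros k. simpl. destruct (Hnext (jk k)). specialize (Hmn (next (jk k))). lia.
  - intros U HU HUe.
    destruct (K2 U HU HUe) as [V1 [V2 [HV1 [HV2 [HV1e [HV2e HV]]]]]].
    destruct (Hs V1 HV1 HV1e) as [N1 HN1].
    destruct (Hg V2 HV2 HV2e) as [N2 HN2].
    exists (max N1 N2). intros k Hk.
    destruct (Hpj (jk k)) as [H1 [H2 [H3 H4]]].
    unfold P in H3.
    rewrite <- (cancR (gpow mul e (g (nj (jk k))) (mj (jk k))) (g (mj (jk k)))).
    apply HV.
    + unfold mj, nj. rewrite <- H3. apply HN1. specialize (Hjk k). lia.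
    + apply HN2. specialize (Hmkk k). lia.
Qed.
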